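(* Consider two spiking layers $\hat\sigma$ and $\tilde\sigma$, each of width $N$ (same threshold $u_{th}$, reset $V_{reset}$, decay $\beta\in(0,1)$, applied coordinatewise), with the same initial temporal input vector $\tilde{\boldsymbol h}^0=\hat{\boldsymbol h}^0$, receiving spatial input feature vectors $\hat{\boldsymbol x}^t,\tilde{\boldsymbol x}^t\in\mathbb{R}^N$, $t=1,\dots,T$. Suppose each coordinate of $\hat{\boldsymbol u}^t=\hat{\boldsymbol h}^{t-1}+\hat{\boldsymbol x}^t$ is a random variable following a $u_{th}$-Neighborhood-Finite Distribution, that $|\tilde x^t_k-\hat x^t_k|\le\epsilon$ for all $k=1,\dots,N$ and $t=1,\dots,T$, and that $\hat\sigma^t(\hat{\boldsymbol x}^t)=\tilde\sigma^t(\tilde{\boldsymbol x}^t)$ for $t=1,\dots,T-1$. Then $P[\hat\sigma^T(\hat{\boldsymbol x}^T)\neq\tilde\sigma^T(\tilde{\boldsymbol x}^T)]$ has an upper bound proportional to $N\frac{\epsilon}{1-\beta}$ (i.e. it is at most a constant multiple of $N\frac{\epsilon}{1-\beta}$, the constant depending only on the distributions of the coordinates of $\hat{\boldsymbol u}^T$).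
   Context: A LIF spiking neuron with firing threshold $u_{th}$, reset potential $V_{reset}$ and decay factor $\beta\in(0,1)$ receives spatial input features $x^1,x^2,\dots$ and evolves by $u^t=h^{t-1}+x^t$, $s^t=\mathrm{Hea}(u^t-u_{th})$, $h^t=V_{reset}s^t+\beta u^t(1-s^t)$, where $\mathrm{Hea}(y)=1$ if $y\ge0$ and $0$ otherwise; the output at timestep $t$ is $\sigma^t(x^t)=s^t$. A spiking layer of width $N$ consists of $N$ such neurons acting independently on the coordinates of a vector input. A probability density $p$ is an $m$-Neighborhood-Finite Distribution if there exists $\epsilon>0$ with $\sup_{x\in[m-\epsilon,m+\epsilon]}p(x)<+\infty$. *)

(* Defs.v *)
From HB Require Import structures.
From mathcomp Require Import all_boot all_order all_algebra.
From mathcomp Require Import all_classical all_reals all_analysis.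
Set Implicit Arguments. Unset Strict Implicit. Unset Printing Implicit Defensive.
Import Order.TTheory GRing.Theory Num.Theory.
Local Open Scope classical_set_scope.
Local Open Scope ring_scope.

Section LIF.
Variable R : realType.

Definition Hea (y : R) : R := if 0 <= y then 1 else 0.

Variables (uth vreset beta : R).

(* Temporal state h^t of one LIF neuron with initial temporal input h0 and
   spatial inputs x 1, x 2, ... (x 0 is unused):
   u^t = h^{t-1} + x^t,  s^t = Hea(u^t - uth),
   h^t = vreset * s^t + beta * u^t * (1 - s^t). *)
Fixpoint lif_h (h0 : R) (x : nat -> R) (t : nat) : R :=
  match t with
  | 0 => h0
  | t'.+1 =>
      let u := lif_h h0 x t' + x t'.+1 in
      vreset * Hea (u - uth) + beta * u * (1 - Hea (u - uth))
  end.

Definition lif_u (h0 : R) (x : nat -> R) (t : nat) : R :=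
  lif_h h0 x t.-1 + x t.

Definition lif_s (h0 : R) (x : nat -> R) (t : nat) : R :=
  Hea (lif_u h0 x t - uth).

Definition layer_u N (h0 : 'I_N -> R) (x : nat -> 'I_N -> R) (t : nat)
  : 'I_N -> R := fun k => lif_u (h0 k) (fun s => x s k) t.

Definition layer_s N (h0 : 'I_N -> R) (x : nat -> 'I_N -> R) (t : nat)
  : 'I_N -> R := fun k => lif_s (h0 k) (fun s => x s k) t.

End LIF.

Definition is_density_of (R : realType) d (Omega : measurableType d)
  (P : probability Omega R) (X : Omega -> R) (p : R -> R) : Prop :=
  (forall x, 0 <= p x) /\ measurable_fun setT p /\
  forall A : set R, measurable A ->
    P (X @^-1` A) = (\int[lebesgue_measure]_(x in A) (p x)%:E)%E.

Definition neighborhood_finite (R : realType) (p : R -> R) (m : R) : Prop :=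
  exists2 eps : R, 0 < eps &
    exists M : R, forall x, m - eps <= x <= m + eps -> p x <= M.

(* Main.v *)
Require Import Defs.
From HB Require Import structures.
From mathcomp Require Import all_boot all_order all_algebra.
From mathcomp Require Import all_classical all_reals all_analysis.
From mathcomp Require Import ring lra measurable_realfun.
Import Order.TTheory GRing.Theory Num.Theory.
Local Open Scope classical_set_scope.
Local Open Scope ring_scope.

Section Meas.
Variables (R : realType) (uth vreset beta : R) (d : measure_display) (Omega : measurableType d).

Lemma meas_Hea (g : Omega -> R) : measurable_fun setT g ->
  measurable_fun setT (fun w => Hea (g w)).
Proof.
move=> mg; rewrite /Hea.
apply: measurable_fun_ifT; last by exact: measurable_cst.
- by apply: measurable_fun_ler => //; exact: measurable_cst.
- exact: measurable_cst.
Qed.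

Lemma meas_lif_h (h0 : Omega -> R) (x : Omega -> nat -> R) :
  measurable_fun setT h0 -> (forall t, measurable_fun setT (fun w => x w t)) ->
  forall t, measurable_fun setT (fun w => lif_h uth vreset beta (h0 w) (x w) t).
Proof.
move=> mh mx; elim=> [//|t IH] /=.
have mu : measurable_fun setT (fun w => lif_h uth vreset beta (h0 w) (x w) t + x w t.+1).
  exact: measurable_funD.
have ms : measurable_fun setT (fun w => Hea (lif_h uth vreset beta (h0 w) (x w) t + x w t.+1 - uth)).
  by apply: meas_Hea; apply: measurable_funB => //; exact: measurable_cst.
apply: measurable_funD.
  by apply: measurable_funM => //; exact: measurable_cst.
apply: measurable_funM.
  by apply: measurable_funM => //; exact: measurable_cst.
by apply: measurable_funB => //; exact: measurable_cst.
Qed.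

Lemma meas_lif_u (h0 : Omega -> R) (x : Omega -> nat -> R) :
  measurable_fun setT h0 -> (forall t, measurable_fun setT (fun w => x w t)) ->
  forall t, measurable_fun setT (fun w => lif_u uth vreset beta (h0 w) (x w) t).
Proof.
move=> mh mx t; rewrite /lif_u; apply: measurable_funD => //.
exact: meas_lif_h.
Qed.

Lemma meas_lif_s (h0 : Omega -> R) (x : Omega -> nat -> R) :
  measurable_fun setT h0 -> (forall t, measurable_fun setT (fun w => x w t)) ->
  forall t, measurable_fun setT (fun w => lif_s uth vreset beta (h0 w) (x w) t).
Proof.
move=> mh mx t; rewrite /lif_s; apply: meas_Hea; apply: measurable_funB.
  exact: meas_lif_u.
exact: measurable_cst.
Qed.
End Meas.
Section Det.
Variables (R : realType) (uth vreset beta : R).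

Lemma Hea01 (y : R) : Hea y = 0 \/ Hea y = 1.
Proof. rewrite /Hea; case: ifP; auto. Qed.

Lemma lif_stepE h0 x t : lif_h uth vreset beta h0 x t.+1 =
  vreset * Hea (lif_u uth vreset beta h0 x t.+1 - uth) +
  beta * lif_u uth vreset beta h0 x t.+1 * (1 - Hea (lif_u uth vreset beta h0 x t.+1 - uth)).
Proof. by []. Qed.

Lemma lif_diff (e : R) h0 (x y : nat -> R) (T : nat) :
  0 <= beta < 1 -> 0 <= e ->
  (forall t, (1 <= t <= T)%N -> `|y t - x t| <= e) ->
  (forall t, (1 <= t < T)%N -> lif_s uth vreset beta h0 x t = lif_s uth vreset beta h0 y t) ->
  forall t, (1 <= t <= T)%N ->
  `|lif_u uth vreset beta h0 y t - lif_u uth vreset beta h0 x t| <= e / (1 - beta).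
Proof.
move=> /andP[b0 b1] e0 hx hs.
have nz : 1 - beta != 0 by rewrite subr_eq0 eq_sym lt_eqF.
have pos : 0 < 1 - beta by rewrite subr_gt0.
have key : forall t, (t < T)%N ->
  `|lif_h uth vreset beta h0 y t - lif_h uth vreset beta h0 x t| <= beta * (e / (1 - beta)).
  elim=> [|t IH] ht.
    by rewrite /= subrr normr0 mulr_ge0 // divr_ge0 // ltW.
  have hu : `|lif_u uth vreset beta h0 y t.+1 - lif_u uth vreset beta h0 x t.+1| <= e / (1 - beta).
    rewrite /lif_u /=.
    have := IH (ltnW ht); have := hx t.+1 (ltnW ht).
    move=> h1 h2.
    have -> : e / (1 - beta) = beta * (e / (1 - beta)) + e by field.
    rewrite (_ : _ - _ = (lif_h uth vreset beta h0 y t - lif_h uth vreset beta h0 x t) + (y t.+1 - x t.+1)); last by ring.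
    by rewrite (le_trans (ler_normD _ _)) // lerD.
  have := hs t.+1 ht; rewrite /lif_s => hse.
  rewrite !lif_stepE -hse.
  set s := Hea _.
  set uy := lif_u _ _ _ _ _ _ in hu *; set ux := lif_u _ _ _ _ _ _ in hu *.
  case: (Hea01 (ux - uth)) => hs0; rewrite /s hs0.
    rewrite (_ : _ - _ = beta * (uy - ux)); last by ring.
    by rewrite normrM ger0_norm // ler_wpM2l.
  rewrite (_ : _ - _ = 0); last by ring.
  by rewrite normr0 mulr_ge0 // divr_ge0 // ltW.
case=> [//|t] /andP[_ ht].
rewrite /lif_u /=.
have h1 := key t ht; have h2 := hx t.+1 ht.
have -> : e / (1 - beta) = beta * (e / (1 - beta)) + e by field.
rewrite (_ : _ - _ = (lif_h uth vreset beta h0 y t - lif_h uth vreset beta h0 x t) + (y t.+1 - x t.+1)); last by ring.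
by rewrite (le_trans (ler_normD _ _)) // lerD.
Qed.
End Det.

Theorem theorem1 (R : realType) (N : nat) (uth : R)
  (pT : 'I_N -> R -> R) :
  (forall k, neighborhood_finite (pT k) uth) ->
  exists C : R, 0 <= C /\
  forall (vreset beta : R) (T : nat) (eps : R)
    (d : measure_display) (Omega : measurableType d) (P : probability Omega R)
    (h0 : Omega -> 'I_N -> R)
    (xhat xtil : Omega -> nat -> 'I_N -> R),
  0 < beta < 1 ->
  (0 < T)%N ->
  (forall k, measurable_fun setT (fun w => h0 w k)) ->
  (forall t k, measurable_fun setT (fun w => xhat w t k)) ->
  (forall t k, measurable_fun setT (fun w => xtil w t k)) ->
  (* each coordinate of u^t = h^{t-1} + x^t follows a uth-NFD, t = 1..T *)
  (forall t k, (1 <= t <= T)%N ->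
     exists p : R -> R,
       is_density_of P (fun w => layer_u uth vreset beta (h0 w) (xhat w) t k) p
       /\ neighborhood_finite p uth) ->
  (* the density of the coordinates of u^T is pT *)
  (forall k,
     is_density_of P (fun w => layer_u uth vreset beta (h0 w) (xhat w) T k)
       (pT k)) ->
  (forall w t k, (1 <= t <= T)%N -> `|xtil w t k - xhat w t k| <= eps) ->
  (forall w t, (1 <= t < T)%N ->
     layer_s uth vreset beta (h0 w) (xhat w) t
     = layer_s uth vreset beta (h0 w) (xtil w) t) ->
  (P [set w | layer_s uth vreset beta (h0 w) (xhat w) T
              <> layer_s uth vreset beta (h0 w) (xtil w) T]
   <= (C * (N%:R * (eps / (1 - beta))))%:E)%E.
Proof.
move=> hpT.
have hex : forall k : 'I_N, exists ep : R * R, 0 < ep.1 /\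
    forall x, uth - ep.1 <= x <= uth + ep.1 -> pT k x <= ep.2.
  by move=> k; have [e e0 [M hM]] := hpT k; exists (e, M).
have [f hf] := choice hex.
pose c (k : 'I_N) := 2 * Num.max (f k).2 0 + (f k).1^-1.
have c0 k : 0 <= c k.
  have h1 := (hf k).1.
  by rewrite /c addr_ge0 ?mulr_ge0 ?le_max ?lexx ?orbT // invr_ge0 ltW.
exists (\sum_(k < N) c k); split; first by apply: sumr_ge0 => k _; exact: c0.
move=> vreset beta T eps d Omega P h0 xhat xtil /andP[b0 b1] T0 mh0 mxh mxt _ hT hx hs.
set delta := eps / (1 - beta).
have [w0 _] : exists w : Omega, True.
  apply: contrapT => nw.
  have E : [set: Omega] = set0 by apply/seteqP; split => // w _; apply: nw; exists w.
  have := probability_setT P; rewrite E measure0 => h.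
  have : (0:R) = 1 by case: h.
  by move/eqP; rewrite eq_sym oner_eq0.
have pos : 0 < 1 - beta by rewrite subr_gt0.
pose X k w := layer_u uth vreset beta (h0 w) (xhat w) T k.
pose Y k w := layer_u uth vreset beta (h0 w) (xtil w) T k.
have mX k : measurable_fun setT (X k).
  exact: (@meas_lif_u R uth vreset beta d Omega (fun w => h0 w k) (fun w s => xhat w s k) (mh0 k) (fun t => mxh t k) T).
have mY k : measurable_fun setT (Y k).
  exact: (@meas_lif_u R uth vreset beta d Omega (fun w => h0 w k) (fun w s => xtil w s k) (mh0 k) (fun t => mxt t k) T).
have dXY w k : `|Y k w - X k w| <= delta.
  apply: (@lif_diff R uth vreset beta eps (h0 w k) (fun s => xhat w s k) (fun s => xtil w s k) T).
  - by rewrite ltW // b1.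
  - by have := hx w T k; rewrite T0 leqnn => /(_ isT); apply: le_trans.
  - by move=> t ht; apply: hx.
  - by move=> t ht; have := hs w t ht => /(congr1 (fun g => g k)).
  - by rewrite T0 leqnn.
pose U k := X k @^-1` `[uth - delta, uth + delta].
have mU k : measurable (U k).
  by have := mX k measurableT _ (measurable_itv `[uth - delta, uth + delta]); rewrite setTI.
pose S := [set w | layer_s uth vreset beta (h0 w) (xhat w) T
              <> layer_s uth vreset beta (h0 w) (xtil w) T].
have SU : S `<=` \bigcup_(k in [set: 'I_N]) U k.
  move=> w Sw; apply: contrapT => nU; apply: Sw.
  apply: funext => k; change (Hea (X k w - uth) = Hea (Y k w - uth)).
  have nk : ~ U k w by move=> Ukw; apply: nU; exists k.
  have := dXY w k; rewrite /U /= in_itv /= in nk.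
  set a := X k w in nk *; set b := Y k w.
  rewrite /Hea !subr_ge0.
  move=> hab.
  have [h1|h1] := leP uth a; have [h2|h2] := leP uth b => //.
  - exfalso; apply: nk; apply/andP; split.
      move: hab; rewrite ler_norml => /andP[? ?]; lra.
    move: hab; rewrite ler_norml => /andP[? ?]; lra.
  - exfalso; apply: nk; apply/andP; split.
      move: hab; rewrite ler_norml => /andP[? ?]; lra.
    move: hab; rewrite ler_norml => /andP[? ?]; lra.
pose W k := [set w | Hea (X k w - uth) != Hea (Y k w - uth)].
have mS : measurable S.
  have -> : S = \bigcup_(k in [set: 'I_N]) W k.
    apply/seteqP; split => w.
      move=> Sw; apply: contrapT => nW; apply: Sw; apply: funext => k.
      change (Hea (X k w - uth) = Hea (Y k w - uth)).
      apply/eqP; apply: contrapT => ne; apply: nW; exists k => //; exact/negP.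
    move=> [k _ Wk] Sw; have := congr1 (fun g => g k) Sw.
    change (Hea (X k w - uth) = Hea (Y k w - uth) -> False).
    by move/eqP; rewrite (negbTE Wk).
  apply: fin_bigcup_measurable; first exact: finite_finset.
  move=> k _.
  have mHX : measurable_fun setT (fun w => Hea (X k w - uth)).
    by apply: meas_Hea; apply: measurable_funB => //; exact: measurable_cst.
  have mHY : measurable_fun setT (fun w => Hea (Y k w - uth)).
    by apply: meas_Hea; apply: measurable_funB => //; exact: measurable_cst.
  have -> : W k = setT `&` (fun w => Hea (X k w - uth) == Hea (Y k w - uth)) @^-1` [set false].
    apply/seteqP; split => w /=.
      by move/negbTE.
    by move=> [_ /negbT].
  exact: (measurable_fun_eqr mHX mHY measurableT (Y := [set false]) I).
have hS : (P S <= \sum_(k < N) P (U k))%E.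
  pose F i := if insub i is Some k then U k else set0.
  have -> : (\sum_(k < N) P (U k) = \sum_(k < N) P (F k))%E.
    by apply: eq_bigr => k _; rewrite /F valK.
  apply: content_subadditive.
  - by move=> i _; rewrite /F; case: insub.
  - exact: mS.
  - move=> w /SU [k _ Ukw]; rewrite -bigcup_mkord; exists (val k) => //=.
    by rewrite /F valK.
have hk k : (P (U k) <= (c k * delta)%:E)%E.
  have e0 : 0 <= eps.
    by have := hx w0 T k; rewrite T0 leqnn => /(_ isT); apply: le_trans.
  have d0 : 0 <= delta by rewrite /delta divr_ge0 // ltW.
  have [f1 hf2] := hf k.
  have [hp0 [mp hden]] := hT k.
  pose M := Num.max (f k).2 0.
  have M0 : 0 <= M by rewrite /M le_max lexx orbT.
  have i0 : 0 <= (f k).1^-1 * delta by rewrite mulr_ge0 // invr_ge0 ltW.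
  have [hd|hd] := lerP delta (f k).1.
  - rewrite /U hden; last exact: measurable_itv.
    apply: (@le_trans _ _ (\int[lebesgue_measure]_(x in `[(uth - delta)%R, (uth + delta)%R]) (M%:E))%E).
      apply: (@ge0_le_integral _ _ _ lebesgue_measure _ (measurable_itv _)).
      + by move=> x _; rewrite lee_fin.
      + apply/measurable_EFinP; apply: measurable_funS mp => //.
      + exact: measurable_cst.
      + move=> x; rewrite /= in_itv /= => /andP[hx1 hx2]; rewrite lee_fin.
        apply: le_trans (hf2 x _) _; last by rewrite /M le_max lexx.
        apply/andP; split; lra.
    rewrite integral_cst; last exact: measurable_itv.
    have L : (lebesgue_measure (`[(uth - delta)%R, (uth + delta)%R]%classic : set R) <= (2 * delta)%:E)%E.
      rewrite lebesgue_measure_itv /=; case: ifP => _.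
        by rewrite -EFinB lee_fin; lra.
      by rewrite lee_fin mulr_ge0.
    apply: (@le_trans _ _ (M%:E * (2 * delta)%:E)%E).
      by apply: lee_wpmul2l; [rewrite lee_fin | exact: L].
    rewrite -EFinM lee_fin.
    have -> : c k * delta = M * (2 * delta) + (f k).1^-1 * delta.
      by rewrite /c /M; ring.
    by rewrite lerDl.
  - apply: le_trans (probability_le1 P (mU k)) _; rewrite lee_fin.
    have h1 : 1 <= (f k).1^-1 * delta by rewrite mulrC ler_pdivlMr // mul1r ltW.
    apply: le_trans h1 _.
    rewrite /c mulrDl lerDr; apply: mulr_ge0 => //; apply: mulr_ge0 => //.
apply: le_trans hS _.
apply: (@le_trans _ _ (\sum_(k < N) (c k * delta)%:E)%E).
  by apply: lee_sum => k _; exact: hk.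
rewrite sumEFin lee_fin.
set C := \sum_(k < N) c k.
have cC k : c k <= C.
  rewrite /C (bigD1 k) //= lerDl; apply: sumr_ge0 => i _; exact: c0.
apply: (@le_trans _ _ (\sum_(k < N) C * delta)).
  apply: ler_sum => k _; apply: ler_wpM2r => //.
  have e0 : 0 <= eps.
    by have := hx w0 T k; rewrite T0 leqnn => /(_ isT); apply: le_trans.
  by rewrite /delta divr_ge0 // ltW.
by rewrite sumr_const card_ord -[C * delta *+ N]mulr_natr le_eqVlt; apply/orP; left; apply/eqP; ring.
Qed.
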